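(* Let $\mathbb{L}(\theta,\omega):=\mathbb{E}_{(x,y)\sim Q}\,\mathcal{L}(\theta,\omega;(x,y))$. Assume: (i) for all $\theta,\omega$, $\mathbb{E}_{(x,y)\sim Q}[\tfrac{\partial\mathcal{L}}{\partial\theta}(\theta,\omega;(x,y))]=\nabla_\theta\mathbb{L}(\theta,\omega)$ and $\mathbb{E}_{(x,y)\sim Q}\|\tfrac{\partial\mathcal{L}}{\partial\theta}(\theta,\omega;(x,y))-\nabla_\theta\mathbb{L}(\theta,\omega)\|^2\le\sigma^2$; (ii) for every sample $(x,y)$ and every $\omega$, $\|\nabla_\theta\mathcal{L}(\theta_1,\omega;(x,y))-\nabla_\theta\mathcal{L}(\theta_2,\omega;(x,y))\|\le l\|\theta_1-\theta_2\|$. Let $g_\theta(\theta,\omega)=\frac1M\sum_{i=1}^M\frac{\partial\mathcal{L}}{\partial\theta}(\theta,\omega;(x_i,y_i))$ be a minibatch gradient estimate with $(x_i,y_i)$ i.i.d. from $Q$, fresh samples being drawn at each evaluation. For iterates $(\theta_t,\omega_t)$ and $\rho>0$, set $\theta_{t+1/2}:=\theta_t+\rho\,g_\theta(\theta_t,\omega_t)$. Then $$\mathbb{E}\|g_\theta(\theta_{t+1/2},\omega_t)\|^2\le(4\rho^2l^2+2\rho l+2)\,\mathbb{E}\|\nabla_\theta\mathbb{L}(\theta_t,\omega_t)\|^2+(5\rho^2l^2+2)\frac{\sigma^2}{M}.$$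
   Context: $\theta$ denotes model parameters and $\omega$ sampling weights; $\mathcal{L}(\theta,\omega;(x,y))$ is a differentiable per-sample loss and $Q$ the data distribution. Expectations are over all sampling randomness. *)

(* Defs.v *)
From HB Require Import structures.
From mathcomp Require Import all_boot all_order all_algebra.
From mathcomp Require Import all_classical all_reals all_analysis.
Set Implicit Arguments. Unset Strict Implicit. Unset Printing Implicit Defensive.
Import Order.TTheory GRing.Theory Num.Theory.
Import numFieldNormedType.Exports.
Local Open Scope classical_set_scope.
Local Open Scope ring_scope.

Section Defs.
Variable R : realType.

Definition enorm (d : nat) (v : 'rV[R]_d) : R :=
  Num.sqrt (\sum_(j < d) (v 0 j) ^+ 2).

Definition grad (d : nat) (f : 'rV[R]_d -> R) (th : 'rV[R]_d) : 'rV[R]_d :=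
  \row_(j < d) ('D_(delta_mx 0 j) f th).

Variables (dX : measure_display) (X : measurableType dX) (W : Type).

Definition sgrad (d : nat) (L : 'rV[R]_d -> W -> X -> R)
  (th : 'rV[R]_d) (w : W) (s : X) : 'rV[R]_d :=
  grad (fun th' => L th' w s) th.

Definition popLoss (Q : probability X R) (d : nat)
  (L : 'rV[R]_d -> W -> X -> R) (th : 'rV[R]_d) (w : W) : R :=
  Rintegral Q setT (fun s => L th w s).

Definition mbgrad (d M : nat) (L : 'rV[R]_d -> W -> X -> R)
  (th : 'rV[R]_d) (w : W) (xs : seq X) : 'rV[R]_d :=
  (M%:R)^-1 *: \sum_(s <- xs) sgrad L th w s.

(* Expectation of F over a sample xs = [:: s_1; ...; s_n] of n i.i.d.
   draws from Q (iterated integral, i.e. integral w.r.t. Q^{(x) n}). *)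
Fixpoint iidE (Q : probability X R) (n : nat) (F : seq X -> \bar R) : \bar R :=
  match n with
  | 0 => F [::]
  | n'.+1 => (\int[Q]_s iidE Q n' (fun xs => F (s :: xs)))%E
  end.
End Defs.

(* Main.v *)
Require Import Defs.
From HB Require Import structures.
From mathcomp Require Import all_boot all_order all_algebra.
From mathcomp Require Import all_classical all_reals all_analysis.
From mathcomp Require Import measurable_realfun ring lra.
Set Implicit Arguments. Unset Strict Implicit. Unset Printing Implicit Defensive.
Import Order.TTheory GRing.Theory Num.Theory.
Import numFieldNormedType.Exports.
Local Open Scope classical_set_scope.
Local Open Scope ring_scope.

Section hp.
Import HBSimple HBNNSimple.
Context d (T : measurableType d) (R : realType) (h : {nnsfun T >-> R}) (K c : R).
Hypothesis c0 : 0 < c.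
Definition hpf := (fun r : R => Num.max (r - K) 0 / c) \o h.
Lemma hp_fin : finite_set (range hpf).
Proof. rewrite /hpf -(image_comp h (fun r : R => Num.max (r - K) 0 / c)).
apply: finite_image. exact: (fimfunP h). Qed.
HB.instance Definition _ := @FiniteImage.Build T R hpf hp_fin.
Lemma hp_meas : measurable_fun setT hpf.
Proof.
apply: (measurable_funM (f := fun x => Num.max (h x - K) 0) (g := cst c^-1)) => //.
apply: (measurable_maxr (f := fun x => h x - K) (g := cst 0)) => //.
exact: (measurable_funB (f := h) (g := cst K)).
Qed.
HB.instance Definition _ := @isMeasurableFun.Build d _ T R hpf hp_meas.
Lemma hp_ge0 x : 0 <= hpf x.
Proof. by rewrite /hpf /= divr_ge0 ?le_max ?lexx ?orbT // ltW. Qed.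
HB.instance Definition _ := @isNonNegFun.Build T R hpf hp_ge0.
Definition hp : {nnsfun T >-> R} := [nnsfun of hpf].
Lemma hpE x : hp x = Num.max (h x - K) 0 / c. Proof. by []. Qed.
End hp.

Section inner.
Local Open Scope ereal_scope.
Import HBSimple HBNNSimple.
Context d (T : measurableType d) (R : realType) (mu : probability T R).

Lemma inner_le (f g : T -> \bar R) (c K : R) :
  (0 < c)%R -> (0 <= K)%R -> (forall x, 0 <= f x) -> (forall x, 0 <= g x) ->
  (forall x, f x <= c%:E * g x + K%:E) ->
  \int[mu]_x f x <= c%:E * \int[mu]_x g x + K%:E.
Proof.
move=> c0 K0 f0 g0 fg.
rewrite ge0_integralTE//; apply: ge_ereal_sup => _ [h /= hf <-].
pose hK : {nnsfun T >-> R} := cst_nnsfun T (NngNum K0).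
pose hc : {nnsfun T >-> R} := scale_nnsfun (hp h K c0) (ltW c0).
have le1 : forall x, (h x <= add_nnsfun hK hc x)%R.
  move=> x /=; rewrite hpE// mulrCA mulfV ?gt_eqF// mulr1.
  rewrite -lerBlDl. by rewrite le_max lexx.
apply: (le_trans (le_sintegral mu le1)).
rewrite sintegralD.
have -> : sintegral mu hK = K%:E.
  rewrite (_ : (hK : T -> R) = cst (NngNum K0)%:num \_ setT); last by rewrite patch_setT.
  rewrite sintegral_EFin_cst // -[RHS]mule1; congr (_ * _); exact: probability_setT.
rewrite addeC leeD2r //.
rewrite (_ : sintegral mu hc = c%:E * sintegral mu (hp h K c0)); last first.
  exact: sintegralrM.
rewrite lee_pmul2l ?lte_fin //.
rewrite ge0_integralTE//; apply: ereal_sup_ubound => /=.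
exists (hp h K c0) => // x; rewrite hpE.
have := le_trans (hf x) (fg x).
case: (g x) (g0 x) => [r| |] //= r0; last by rewrite leey.
rewrite -EFinM -EFinD !lee_fin => hle.
rewrite ler_pdivrMr // mulrC.
rewrite ge_max mulr_ge0 ?andbT //; last exact: ltW.
by rewrite lerBlDl addrC.
Qed.
End inner.

Definition sq (R : realType) (d : nat) (v : 'rV[R]_d) : R := \sum_(j < d) (v 0 j) ^+ 2.

Lemma sq_ge0 (R : realType) d (v : 'rV[R]_d) : 0 <= sq v.
Proof. by apply: sumr_ge0 => j _; exact: sqr_ge0. Qed.

Lemma sq_expand (R : realType) d (b m u : 'rV[R]_d) (al be : R) :
  al * sq (b + (m + u)) + be =
  (al * sq (b + m) + be) + (\sum_(j < d) (2 * al * (b 0 j + m 0 j)) * u 0 j)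
  + al * sq u.
Proof.
have e1 : \sum_(j < d) ((b + (m + u)) 0 j) ^+ 2 = \sum_(j < d) ((b + m) 0 j) ^+ 2
   + \sum_(j < d) 2 * (b 0 j + m 0 j) * u 0 j + \sum_(j < d) (u 0 j) ^+ 2.
  by rewrite -!big_split; apply: eq_bigr => j _ /=; rewrite !mxE; ring.
have e2 : \sum_(j < d) (2 * al * (b 0 j + m 0 j)) * u 0 j =
   al * \sum_(j < d) 2 * (b 0 j + m 0 j) * u 0 j.
  by rewrite mulr_sumr; apply: eq_bigr => j _; ring.
rewrite /sq e1 e2; ring.
Qed.

Section onelevel.
Local Open Scope ereal_scope.
Context d0 (X : measurableType d0) (R : realType) (Q : probability X R) (d : nat).
Variables (v : X -> 'rV[R]_d) (m : 'rV[R]_d).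
Hypothesis vint : forall j, Q.-integrable setT (fun s => (v s 0 j)%:E).
Hypothesis vmean : forall j, \int[Q]_s (v s 0 j)%:E = (m 0 j)%:E.
Hypothesis uint : Q.-integrable setT (fun s => (sq (v s - m))%:E).

Definition Vof := fine (\int[Q]_s (sq (v s - m))%:E).

Lemma Vof_ge0 : (0 <= Vof)%R.
Proof. by apply: fine_ge0; apply: integral_ge0 => s _; rewrite lee_fin sq_ge0. Qed.

Lemma onelevel (b : 'rV[R]_d) (al be : R) :
  \int[Q]_s (al * sq (b + v s) + be)%:E = (al * (sq (b + m) + Vof) + be)%:E.
Proof.
have uj j : Q.-integrable setT (fun s => ((v s - m) 0 j)%:E).
  under eq_fun do rewrite !mxE EFinB.
  apply: (integrableB _ (vint j)) => //.
  exact: finite_measure_integrable_cst.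
have ucj (c : R) j : Q.-integrable setT (fun s => (c * (v s - m) 0 j)%:E).
  under eq_fun do rewrite EFinM.
  exact: integrableZl.
have Scst : forall j, \int[Q]_s ((v s - m) 0 j)%:E = 0.
  move=> j; under eq_integral do rewrite !mxE EFinB.
  rewrite integralB_EFin //; [|exact: vint|exact: finite_measure_integrable_cst].
  rewrite vmean integral_cst //.
  by rewrite [X in _ * X]probability_setT mule1 subee.
under eq_integral => s _.
  rewrite (_ : v s = (m + (v s - m))%R); last by rewrite addrC subrK.
  rewrite sq_expand !EFinD.
  over.
have iA : Q.-integrable setT (fun _ : X => (al * sq (b + m))%:E + be%:E).
  rewrite -EFinD; exact: (finite_measure_integrable_cst Q (al * sq (b + m) + be)%R measurableT).
have iS : Q.-integrable setT (fun s => (\sum_(j < d) 2 * al * (b 0 j + m 0 j) * (v s - m) 0 j)%:E).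
  under eq_fun do rewrite -sumEFin.
  by apply: integrable_sum => // j _; exact: ucj.
have iC : Q.-integrable setT (fun s => (al * sq (v s - m))%:E).
  under eq_fun do rewrite EFinM; exact: integrableZl.
rewrite /= integralD //; last exact: integrableD.
rewrite integralD //.
rewrite -EFinD integral_cst // [X in _ * X]probability_setT mule1.
under eq_integral do rewrite -sumEFin.
have iSj : forall j, Q.-integrable setT (fun s => (2 * al * (b 0 j + m 0 j) * (v s - m) 0 j)%:E).
  by move=> j; exact: ucj.
rewrite integral_sum //.
rewrite big1 ?adde0; last first.
  move=> j _; under eq_integral do rewrite EFinM.
  rewrite integralZl ?Scst ?mule0 //; exact: uj.
under eq_integral do rewrite EFinM.
rewrite integralZl //.
have -> : \int[Q]_x (sq (v x - m))%:E = Vof%:E.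
  by rewrite /Vof fineK //; exact: integrable_fin_num.
by rewrite -EFinM -EFinD; congr (_%:E); ring.
Qed.
Lemma iid_sum n (a : 'rV[R]_d) (al be : R) :
  iidE Q n (fun ys => (al * sq (a + \sum_(y <- ys) v y) + be)%:E) =
  (al * (sq (a + n%:R *: m) + n%:R * Vof) + be)%:E.
Proof.
elim: n a al be => [|n IH] a al be /=.
  by rewrite big_nil scale0r !addr0 mul0r addr0.
under eq_integral => s _.
  rewrite (_ : (fun xs => _) = (fun xs => (al * sq ((a + v s) + \sum_(y <- xs) v y) + be)%R%:E)); last first.
    by apply: funext => xs; rewrite big_cons [in LHS]addrA.
  rewrite IH.
  rewrite (_ : (al * (sq (a + v s + n%:R *: m) + n%:R * Vof) + be)%R =
     (al * sq ((a + n%:R *: m) + v s) + (al * n%:R * Vof + be))%R); last first.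
    by rewrite [(a + v s + _)%R]addrAC; ring.
  over.
rewrite onelevel; congr (_%:E).
rewrite -addrA.
rewrite (_ : (n%:R *: m + m)%R = n.+1%:R *: m)%R; last by rewrite mulrSr scalerDl scale1r.
by rewrite mulrSr; ring.
Qed.
End onelevel.

Section iidmono.
Local Open Scope ereal_scope.
Context d0 (X : measurableType d0) (R : realType) (Q : probability X R).

Lemma iidE_ge0 n (F : seq X -> \bar R) : (forall xs, 0 <= F xs) -> 0 <= iidE Q n F.
Proof.
elim: n F => [|n IH] F F0 /=; first exact: F0.
by apply: integral_ge0 => s _; apply: IH.
Qed.

Lemma iidE_le n (F G : seq X -> \bar R) : (forall xs, 0 <= F xs) ->
  (forall xs, F xs <= G xs) -> iidE Q n F <= iidE Q n G.
Proof.
elim: n F G => [|n IH] F G F0 FG /=; first exact: FG.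
have := @inner_le _ _ _ Q (fun s => iidE Q n (fun xs => F (s :: xs)))
   (fun s => iidE Q n (fun xs => G (s :: xs))) 1 0 ltr01 (lexx 0).
rewrite mul1e adde0; apply.
- by move=> s; apply: iidE_ge0.
- by move=> s; apply: iidE_ge0 => xs; apply: le_trans (FG _).
- by move=> s; rewrite mul1e adde0; apply: IH.
Qed.
End iidmono.


Lemma mxBE (R : pzRingType) m n (A B : 'M[R]_(m, n)) i j : (A - B) i j = A i j - B i j.
Proof. by rewrite !mxE. Qed.

Section vec.
Context (R : realType) (d : nat).
Implicit Types (a b : 'rV[R]_d).

Lemma enorm2 a : enorm a ^+ 2 = sq a.
Proof. by rewrite /enorm sqr_sqrtr // sq_ge0. Qed.

Lemma enorm_ge0 a : 0 <= enorm a.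
Proof. exact: sqrtr_ge0. Qed.

Lemma sqZ (c : R) a : sq (c *: a) = c ^+ 2 * sq a.
Proof. by rewrite /sq mulr_sumr; apply: eq_bigr => j _; rewrite mxE exprMn. Qed.

Lemma sqN a : sq (- a) = sq a.
Proof. by rewrite -scaleN1r sqZ expr2 mulrNN mulr1 mul1r. Qed.

Lemma sqD_le a b : sq (a + b) <= 2 * sq a + 2 * sq b.
Proof.
rewrite /sq !mulr_sumr -big_split /=; apply: ler_sum => j _; rewrite mxE.
have := sqr_ge0 (a 0 j - b 0 j); nra.
Qed.

Lemma sq0 : sq (0 : 'rV[R]_d) = 0.
Proof. by rewrite /sq big1 // => j _; rewrite mxE expr0n. Qed.
End vec.

Lemma msq d0 (X : measurableType d0) (R : realType) d (w : X -> 'rV[R]_d) :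
  (forall j, measurable_fun setT (fun s => w s 0 j)) ->
  measurable_fun setT (fun s => (sq (w s))%:E).
Proof.
move=> mw; apply/measurable_EFinP; rewrite /sq.
apply: measurable_sum => j.
exact: measurable_funX.
Qed.

Lemma arith (R : realType) (l rho M e V0 s2 : R) : 0 < rho -> 0 < M -> 0 <= e ->
  0 <= l * e -> 0 <= V0 -> V0 <= s2 ->
  (2 * l ^+ 2 * rho ^+ 2 / M ^+ 2) * (M ^+ 2 * e ^+ 2 + M * V0) + (2 * e ^+ 2 + s2 / M)
  <= (4 * rho ^+ 2 * l ^+ 2 + 2 * rho * l + 2) * e ^+ 2 + (5 * rho ^+ 2 * l ^+ 2 + 2) * (s2 / M).
Proof.
move=> r0 M0 e0 le0 V00 Vs.
have -> : (2 * l ^+ 2 * rho ^+ 2 / M ^+ 2) * (M ^+ 2 * e ^+ 2 + M * V0)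
  = 2 * l ^+ 2 * rho ^+ 2 * e ^+ 2 + 2 * l ^+ 2 * rho ^+ 2 * (V0 / M).
  by field; rewrite gt_eqF.
have h1 : V0 / M <= s2 / M by rewrite ler_pM2r // invr_gt0.
have h2 : 0 <= V0 / M by rewrite divr_ge0 // ltW.
have h3 : 0 <= rho * (l * e) * e by rewrite mulr_ge0 // mulr_ge0 // ltW.
have h4 : 0 <= (rho * l) ^+ 2 by exact: sqr_ge0.
have h5 : 0 <= (rho * l) ^+ 2 * e ^+ 2 by rewrite mulr_ge0 // sqr_ge0.
have h6 : (rho * l) ^+ 2 * (V0 / M) <= (rho * l) ^+ 2 * (s2 / M) by rewrite ler_wpM2l.
have h7 : 0 <= (rho * l) ^+ 2 * (s2 / M) by rewrite mulr_ge0 // (le_trans h2 h1).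
rewrite !exprMn in h4 h5 h6 h7.
have h8 : 0 <= s2 / M by exact: le_trans h2 h1.
nra.
Qed.

Unset Implicit Arguments.
Set Strict Implicit.

Theorem lemmaA3 (R : realType) (d M : nat)
  (dX : measure_display) (X : measurableType dX) (Q : probability X R)
  (W : Type) (L : 'rV[R]_d -> W -> X -> R) (sigma l rho : R)
  (dT : measure_display) (T : measurableType dT) (P : probability T R)
  (theta_t : T -> 'rV[R]_d) (omega_t : T -> W) :
  (0 < M)%N ->
  0 < rho ->
  (forall (w : W) (s : X) (th : 'rV[R]_d),
      differentiable (fun th' => L th' w s) th) ->
  (forall (th : 'rV[R]_d) (w : W), Q.-integrable setT (fun s => (L th w s)%:E)) ->
  (forall (w : W) (th : 'rV[R]_d),
      differentiable (fun th' => popLoss Q L th' w) th) ->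
  (forall (th : 'rV[R]_d) (w : W) (j : 'I_d),
      Q.-integrable setT (fun s => (sgrad L th w s 0 j)%:E) /\
      (\int[Q]_s (sgrad L th w s 0 j)%:E
         = (grad (fun th' => popLoss Q L th' w) th 0 j)%:E)%E) ->
  (forall (th : 'rV[R]_d) (w : W),
      (\int[Q]_s ((enorm (sgrad L th w s
                    - grad (fun th' => popLoss Q L th' w) th)) ^+ 2)%:E
         <= (sigma ^+ 2)%:E)%E) ->
  (forall (s : X) (w : W) (th1 th2 : 'rV[R]_d),
      enorm (sgrad L th1 w s - sgrad L th2 w s) <= l * enorm (th1 - th2)) ->
  (\int[P]_tau
     iidE Q M (fun xs =>
       iidE Q M (fun ys =>
         ((enorm (mbgrad M L
             (theta_t tau + rho *: mbgrad M L (theta_t tau) (omega_t tau) xs)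
             (omega_t tau) ys)) ^+ 2)%:E))
   <= (4 * rho ^+ 2 * l ^+ 2 + 2 * rho * l + 2)%:E
        * (\int[P]_tau
             ((enorm (grad (fun th' => popLoss Q L th' (omega_t tau))
                        (theta_t tau))) ^+ 2)%:E)
      + ((5 * rho ^+ 2 * l ^+ 2 + 2) * (sigma ^+ 2 / M%:R))%:E)%E.
Proof.
move=> M0 rho0 _ _ _ Hunb Hvar Hlip.
set mG := fun th w => grad (fun th' => popLoss Q L th' w) th.
have Hv th w j : Q.-integrable setT (fun s => (sgrad L th w s 0 j)%:E) := (Hunb th w j).1.
have Hm th w j : (\int[Q]_s (sgrad L th w s 0 j)%:E = (mG th w 0 j)%:E)%E := (Hunb th w j).2.
have Hvar' th w : (\int[Q]_s (sq (sgrad L th w s - mG th w))%:E <= (sigma ^+ 2)%:E)%E.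
  by have := Hvar th w; under eq_integral do rewrite enorm2.
have msg th w j : measurable_fun setT (fun s => sgrad L th w s 0 j).
  by apply/measurable_EFinP; exact: (measurable_int _ (Hv th w j)).
have Hu th w : Q.-integrable setT (fun s => (sq (sgrad L th w s - mG th w))%:E).
  apply/integrableP; split.
    apply: msq => j; under eq_fun do rewrite mxBE.
    by apply: measurable_funB => //; exact: msg.
  under eq_integral do rewrite gee0_abs ?lee_fin ?sq_ge0 //.
  exact: le_lt_trans (Hvar' th w) (ltey _).
have HV th w : Vof Q (sgrad L th w) (mG th w) <= sigma ^+ 2.
  rewrite /Vof -lee_fin fineK; first exact: Hvar'.
  exact: integrable_fin_num (Hu th w).
have HV0 th w : 0 <= Vof Q (sgrad L th w) (mG th w).
  by apply: fine_ge0; apply: integral_ge0 => s _; rewrite lee_fin sq_ge0.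
have Hit th w := iid_sum (Hv th w) (Hm th w) (Hu th w).
have Hlip2 s w th1 th2 : sq (sgrad L th1 w s - sgrad L th2 w s) <= l ^+ 2 * sq (th1 - th2).
  rewrite -!enorm2 -exprMn; have := Hlip s w th1 th2.
  have := enorm_ge0 (sgrad L th1 w s - sgrad L th2 w s).
  move=> h0 h1; have h2 := le_trans h0 h1.
  by rewrite ler_pXn2r // nnegrE.
have Hjl th1 th2 w : sq (mG th1 w - mG th2 w) <= l ^+ 2 * sq (th1 - th2).
  pose D s := sgrad L th1 w s - sgrad L th2 w s.
  pose mD := mG th1 w - mG th2 w.
  pose K := l ^+ 2 * sq (th1 - th2).
  have hDint j : Q.-integrable setT (fun s => (D s 0 j)%:E).
    under eq_fun do rewrite mxBE EFinB.
    exact: integrableB.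
  have hDmean j : (\int[Q]_s (D s 0 j)%:E = (mD 0 j)%:E)%E.
    under eq_integral do rewrite mxBE.
    rewrite integralB_EFin //; [|exact: Hv|exact: Hv].
    etransitivity; first by apply: congr2; [exact: Hm|apply: congr1; exact: Hm].
    by rewrite mxBE EFinB.
  have mDs k : measurable_fun setT (fun s => (D s - mD) 0 k).
    under eq_fun do rewrite mxBE mxBE.
    by apply: measurable_funB => //; apply: measurable_funB => //; exact: msg.
  have hDu : Q.-integrable setT (fun s => (sq (D s - mD))%:E).
    apply: (@le_integrable _ _ _ _ _ measurableT _ (EFin \o cst (2 * K + 2 * sq mD))) => //.
    - exact: msq.
    - move=> s _; rewrite /= lee_fin !ger0_norm ?sq_ge0 //; last first.
        by rewrite addr_ge0 // mulr_ge0 // ?sq_ge0 // mulr_ge0 // ?sqr_ge0 ?sq_ge0.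
      apply: le_trans (sqD_le _ _) _; rewrite sqN lerD2r ler_pM2l //.
      exact: Hlip2.
    - exact: finite_measure_integrable_cst.
  have := onelevel hDint hDmean hDu 0 1 0.
  under eq_integral do rewrite add0r mul1r addr0.
  rewrite add0r mul1r addr0 => hEq.
  have : (\int[Q]_s (sq (D s))%:E <= K%:E)%E.
    have E0 : (\int[Q]_x (cst 0%E) x = 0)%E by exact: integral0.
    have K0 : 0 <= K by rewrite mulr_ge0 ?sqr_ge0 ?sq_ge0.
    apply: le_trans (@inner_le _ _ _ Q (fun s => (sq (D s))%:E) (cst 0%E) 1 K ltr01 K0 _ _ _) _.
    - by move=> s; rewrite lee_fin sq_ge0.
    - by [].
    - by move=> s /=; rewrite mule0 add0e lee_fin; exact: Hlip2.
    - by rewrite E0 mule0 add0e.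
  rewrite hEq lee_fin => h.
  have := Vof_ge0 Q D mD.
  move: h; rewrite /K /mD; lra.
have [s0 _] : exists s : X, True.
  apply: contrapT => hX.
  have hT : [set: X] = set0 by apply/seteqP; split => x // _; apply: hX; exists x.
  have h1 : (Q [set: X] = 1)%E by exact: probability_setT.
  move: h1; rewrite hT measure0 => /esym/eqP; rewrite gt_eqF // lte01.
set c := 4 * rho ^+ 2 * l ^+ 2 + 2 * rho * l + 2.
set K := (5 * rho ^+ 2 * l ^+ 2 + 2) * (sigma ^+ 2 / M%:R).
have Mr0 : 0 < (M%:R : R) by rewrite ltr0n.
have c0 : 0 < c.
  rewrite /c; have := sqr_ge0 (2 * rho * l + 1); have := sqr_ge0 (rho * l); nra.
have K0 : 0 <= K.
  rewrite /K; apply: mulr_ge0; last by rewrite divr_ge0 ?sqr_ge0 ?ltW.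
  have := sqr_ge0 rho; have := sqr_ge0 l; nra.
apply: (@inner_le _ _ _ P _ _ c K c0 K0).
- by move=> tau; apply: iidE_ge0 => xs; apply: iidE_ge0 => ys; rewrite lee_fin sqr_ge0.
- by move=> tau; rewrite lee_fin sqr_ge0.
move=> tau.
set th := theta_t tau; set w := omega_t tau.
have -> : grad ((popLoss Q L)^~ w) th = mG th w by [].
set m := mG th w.
have le0 : 0 <= l * enorm m.
  have := le_trans (enorm_ge0 _) (Hlip s0 w m 0); by rewrite subr0.
have MR0 : (M%:R : R) != 0 by rewrite gt_eqF.
have step1 xs : iidE Q M (fun ys => (enorm (mbgrad M L (th + rho *: mbgrad M L th w xs) w ys) ^+ 2)%:E)
   = (sq (mG (th + rho *: mbgrad M L th w xs) w) + Vof Q (sgrad L (th + rho *: mbgrad M L th w xs) w) (mG (th + rho *: mbgrad M L th w xs) w) / M%:R)%:E.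
  set th' := th + rho *: mbgrad M L th w xs.
  rewrite (_ : (fun ys => _) = (fun ys => ((M%:R^-1) ^+ 2 * sq (0 + \sum_(y <- ys) sgrad L th' w y) + 0)%:E)); last first.
    by apply: funext => ys; rewrite enorm2 /mbgrad sqZ add0r addr0.
  rewrite Hit add0r sqZ; congr (_%:E); field; exact: MR0.
rewrite (funext step1).
set a2 := 2 * l ^+ 2 * rho ^+ 2 / M%:R ^+ 2.
set b2 := 2 * sq m + sigma ^+ 2 / M%:R.
have Hle : (iidE Q M (fun xs => (sq (mG (th + rho *: mbgrad M L th w xs) w) + Vof Q (sgrad L (th + rho *: mbgrad M L th w xs) w) (mG (th + rho *: mbgrad M L th w xs) w) / M%:R)%:E) <= iidE Q M (fun xs => (a2 * sq (0 + \sum_(x <- xs) sgrad L th w x) + b2)%:E))%E.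
  apply: iidE_le => xs.
    by rewrite lee_fin addr_ge0 ?sq_ge0 // divr_ge0 // ?HV0 ?ltW.
  set th' := th + rho *: mbgrad M L th w xs.
  rewrite lee_fin.
  have a1 := sqD_le m (mG th' w - m).
  rewrite addrC subrK in a1.
  have a2' := Hjl th' th w.
  rewrite (_ : th' - th = rho *: mbgrad M L th w xs) in a2'; last by rewrite /th' addrC addKr.
  rewrite /mbgrad !sqZ in a2'.
  have a3 : Vof Q (sgrad L th' w) (mG th' w) / M%:R <= sigma ^+ 2 / M%:R.
    by rewrite ler_pM2r ?invr_gt0 //; exact: HV.
  have a4 : sq (mG th' w - m) = sq (mG th' w - mG th w) by [].
  rewrite add0r /a2 /b2.
  rewrite -a4 in a2'.
  move: a1 a2' a3.
  set S := sq (\sum_(s <- xs) sgrad L th w s).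
  set U := sq (mG th' w - m); set Z := sq (mG th' w).
  set V := Vof _ _ _ / M%:R.
  have -> : 2 * l ^+ 2 * rho ^+ 2 / M%:R ^+ 2 * S = 2 * (l ^+ 2 * (rho ^+ 2 * (M%:R^-1 ^+ 2 * S))).
    by rewrite exprVn; ring.
  set Y := l ^+ 2 * _.
  lra.
apply: le_trans Hle _.
rewrite Hit add0r sqZ -EFinM -EFinD lee_fin /a2 /b2 /c /K -enorm2.
exact: (arith rho0 Mr0 (enorm_ge0 m) le0 (HV0 th w) (HV th w)).
Qed.
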